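(* Let $G=(V,E)$ have $|V|=2$, let $N>3$, $\varepsilon\in(0,\frac1{N-1}]$ and $s_0\in S_{nc}$. Then for every $\gamma\in(0,1)$, every trigger strategies profile $\bar\sigma$ of $\Gamma_N(G|s_0,\gamma,\varepsilon)$ is nonpositional.
   Context: Setting. $G=(V,E)$ is a finite, simple, connected, undirected graph; $N\ge 3$ is an integer; $\gamma\in(0,1)$ and $\varepsilon\in[0,\frac1{N-1}]$ are parameters. There are $N$ tokens: cops $C_1,\dots,C_{N-1}$ (tokens $1,\dots,N-1$) and the robber $R$ (token $N$). A state is $s=(x^1,\dots,x^N,n)$ where $x^i\in V$ is the position of token $i$ and $n\in\{1,\dots,N\}$ is the token that moves next; $S^n$ denotes the set of states with token $n$ to move. A state is a capture state if $x^i=x^N$ for some $i\le N-1$; $S_{nc}$ is the set of noncapture states. In each turn exactly one token, the one to move, moves to a vertex of its closed neighbourhood (it may stay put); the order of moves is $C_1,C_2,\dots,C_{N-1},R,C_1,\dots$. Starting from an initial state $s_0\in S_{nc}$ at time $0$, the capture time is the first time $t$ at which a capture state occurs (infinite if never); after capture the game is over. Auxiliary games. For $m\in\{1,\dots,N\}$, $\Gamma_N^m(G|s_0,\gamma,\varepsilon)$ is the two-player zero-sum game in which player $P_m$ controls token $m$ and player $P_{-m}$ controls all other tokens, with the following payoff to $P_m$ ($P_{-m}$ receives its negative): $0$ if no capture ever occurs; if capture occurs at time $t$: for $m=N$, $-\gamma^t$; for $m\le N-1$, $\frac{1-\varepsilon}{K}\gamma^t$ if exactly $K\in\{1,\dots,N-2\}$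 cops, including $C_m$, are on the robber's vertex, $\frac{\varepsilon}{N-K-1}\gamma^t$ if exactly $K\in\{1,\dots,N-2\}$ cops, not including $C_m$, are on the robber's vertex, and $\frac{\gamma^t}{N-1}$ if all $N-1$ cops are on the robber's vertex. $\Gamma^N_N$ is the modified cops-and-robber (CR) game. A pure positional strategy for token $n$ maps each state in $S^n\cap S_{nc}$ to an allowed next vertex. Each $\Gamma^m_N$ has optimal pure positional strategies (optimal from every initial state). For $m,n\in\{1,\dots,N\}$, $\phi^n_m$ denotes the strategy of token $n$ in a chosen pair of optimal pure positional strategies of $\Gamma^m_N$ (so $\phi^m_m$ is $P_m$'s optimal strategy and $(\phi^n_m)_{n\ne m}$ is $P_{-m}$'s). $\widehat\Sigma^n$ is the set of pure positional strategies of token $n$ that are components of optimal strategy pairs of $\Gamma^N_N$ (CR-optimal strategies). Trigger strategies. Given a choice of $(\phi^n_m)_{n,m}$, the trigger strategies profile $\bar\sigma=(\bar\sigma^1,\dots,\bar\sigma^N)$ of the $N$-player SCAR game $\Gamma_N(G|s_0,\gamma,\varepsilon)$ (same board and moves; player $n$ controls token $n$) is: token $n$, at current state $s$, plays $\phi^n_n(s)$ as long as every other player $m$ has followed $\phi^m_m$, and plays $\phi^n_m(s)$ from the moment a player $m\neq n$ deviates from $\phi^m_m$. Different choices of the optimal strategies give different trigger strategies profiles. $\bar\sigma$ is called positional if for all $n,m\in\{1,\dots,N\}$ there is $\widehat\sigma^n\in\widehat\Sigma^n$ with $\phi^n_m(s)=\widehat\sigma^n(s)$ for every state $s\in S^n\cap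 S_{nc}$ reachable from $s_0$ by a finite sequence of legal moves passing only through noncapture states; otherwise $\bar\sigma$ is nonpositional. *)

(* Defs.v *)
From HB Require Import structures.
From mathcomp Require Import all_boot.
From Stdlib Require Import Reals ClassicalEpsilon.

Set Implicit Arguments.
Unset Strict Implicit.
Unset Printing Implicit Defensive.

(* Tokens are 'I_N, 0-indexed: token i (val i < N-1) is cop C_{i+1};
   token with value N-1 is the robber R.
   A state is (positions, token to move). *)
Notation state N T := ({ffun 'I_N -> T} * 'I_N)%type.

Definition is_robber (N : nat) (i : 'I_N) : bool := val i == N.-1.
Definition is_cop (N : nat) (i : 'I_N) : bool := val i != N.-1.

Definition on_robber (N : nat) (T : finType) (s : state N T) (i : 'I_N) : bool :=
  [exists j : 'I_N, is_robber j && (s.1 i == s.1 j)].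

Definition capture (N : nat) (T : finType) (s : state N T) : bool :=
  [exists i : 'I_N, is_cop i && on_robber s i].

Definition ncops_on (N : nat) (T : finType) (s : state N T) : nat :=
  #|[pred i : 'I_N | is_cop i && on_robber s i]|.

Definition legal (T : finType) (e : rel T) (x y : T) : bool := (y == x) || e x y.

Definition step (N : nat) (T : finType) (s : state N T) (v : T) : state N T :=
  ([ffun i => if i == s.2 then v else s.1 i], ordS s.2).

(* general (history dependent) pure strategy profile: token n, given the
   past states and the current state, chooses a vertex *)
Definition profile (N : nat) (T : finType) :=
  'I_N -> seq (state N T) -> state N T -> T.

Fixpoint run (N : nat) (T : finType) (f : profile N T) (past : seq (state N T))
    (cur : state N T) (t : nat) : state N T :=
  match t with
  | 0 => cur
  | t'.+1 => run f (rcons past cur) (step cur (f cur.2 past cur)) t'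
  end.

Definition play (N : nat) (T : finType) (f : profile N T) (s0 : state N T) (t : nat) :=
  run f [::] s0 t.

Definition reward (N : nat) (T : finType) (eps : R) (m : 'I_N) (s : state N T) : R :=
  if is_robber m then (-1)%R
  else let K := ncops_on s in
       if K == N.-1 then (/ INR (N.-1))%R
       else if on_robber s m then ((1 - eps) / INR K)%R
       else (eps / INR (N - K - 1))%R.

Definition payoff (N : nat) (T : finType) (gamma eps : R) (m : 'I_N)
    (f : profile N T) (s0 : state N T) : R :=
  match excluded_middle_informative (exists t, capture (play f s0 t)) with
  | left H => let t := @ex_minn (fun t => capture (play f s0 t)) H in
              (reward eps m (play f s0 t) * pow gamma t)%R
  | right _ => 0%R
  end.

Definition legal_profile (N : nat) (T : finType) (e : rel T) (f : profile N T) : Prop :=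
  forall past cur, ~~ capture cur -> legal e (cur.1 cur.2) (f cur.2 past cur).

Definition pprofile (N : nat) (T : finType) := 'I_N -> state N T -> T.

Definition embed (N : nat) (T : finType) (phi : pprofile N T) : profile N T :=
  fun n _ cur => phi n cur.

Definition legal_pos (N : nat) (T : finType) (e : rel T) (phi : pprofile N T) : Prop :=
  forall cur, ~~ capture cur -> legal e (cur.1 cur.2) (phi cur.2 cur).

Definition mix (N : nat) (T : finType) (m : 'I_N) (a b : profile N T) : profile N T :=
  fun n => if n == m then a n else b n.

Definition optimal_pair (N : nat) (T : finType) (e : rel T) (gamma eps : R)
    (m : 'I_N) (phi : pprofile N T) : Prop :=
  legal_pos e phi /\
  forall s0 : state N T, ~~ capture s0 ->
  forall g : profile N T, legal_profile e g ->
    (payoff gamma eps m (mix m g (embed phi)) s0 <= payoff gamma eps m (embed phi) s0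
     <= payoff gamma eps m (mix m (embed phi) g) s0)%R.

Definition CR_optimal (N : nat) (T : finType) (e : rel T) (gamma eps : R)
    (n : 'I_N) (sigma : state N T -> T) : Prop :=
  (forall s : state N T, s.2 = n -> ~~ capture s -> legal e (s.1 n) (sigma s)) /\
  exists (r : 'I_N) (phi : pprofile N T),
    is_robber r /\ optimal_pair e gamma eps r phi /\
    forall s : state N T, s.2 = n -> ~~ capture s -> phi n s = sigma s.

Inductive reach (N : nat) (T : finType) (e : rel T) (s0 : state N T) : state N T -> Prop :=
  | reach0 : reach e s0 s0
  | reachS s v : reach e s0 s -> ~~ capture s -> legal e (s.1 s.2) v ->
                 reach e s0 (step s v).

(* a choice of optimal strategies: phi m n = phi^n_m, and (phi m) is an
   optimal pure positional pair of Gamma^m_N; this determines a trigger profile *)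
Definition trigger_choice (N : nat) (T : finType) (e : rel T) (gamma eps : R)
    (phi : 'I_N -> pprofile N T) : Prop :=
  forall m, optimal_pair e gamma eps m (phi m).

Definition positional_trigger (N : nat) (T : finType) (e : rel T) (gamma eps : R)
    (s0 : state N T) (phi : 'I_N -> pprofile N T) : Prop :=
  forall n m : 'I_N, exists sigma : state N T -> T,
    CR_optimal e gamma eps n sigma /\
    forall s, reach e s0 s -> s.2 = n -> ~~ capture s -> phi m n s = sigma s.

(* Main.v *)
Require Import Defs.
From mathcomp Require Import all_boot.
From Stdlib Require Import Reals.
From mathcomp Require Import zify.
From Stdlib Require Import Lra ClassicalEpsilon.
Set Implicit Arguments.
Unset Strict Implicit.

Section FinR.
Local Open Scope R_scope.
Lemma final_contra (c g : R) : 0 < c -> 0 < g < 1 -> c * g ^ 1 <= c * g ^ 2 -> False.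
Proof. intros Hc Hg H. simpl in H. assert (A: 0 < c * g) by (apply Rmult_lt_0_compat; lra). assert (B: 0 < (c*g) * (1 - g)) by (apply Rmult_lt_0_compat; lra). nra. Qed.
Lemma pos_div (eps x : R) : 0 < eps -> 0 < x -> 0 < eps / x.
Proof. intros; apply Rdiv_lt_0_compat; auto. Qed.
End FinR.
Lemma two_pts (T : finType) (HV : #|T| = 2) (x y z : T) :
  x != z -> y != z -> x = y.
Proof.
move=> xz yz; apply/eqP/negPn/negP => nxy.
have U : uniq [:: x; y; z] by rewrite /= !inE negb_or nxy xz yz.
have := max_card (mem [:: x; y; z]); rewrite (card_uniqP U) HV //.
Qed.

Lemma legal_all (T : finType) (e : rel T) (Hirr : irreflexive e)
  (Hconn : forall x y : T, connect e x y) (HV : #|T| = 2) x y : legal e x y.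
Proof.
rewrite /legal; case: eqVneq => //= yx.
have /connectP [[|z q] P E] := Hconn x y; first by rewrite /= in E; rewrite E eqxx in yx.
move: P => /= /andP [exz _].
have zx : z != x by apply/negP => /eqP zx; rewrite zx Hirr in exz.
by rewrite -(two_pts HV zx yx).
Qed.

Lemma payoff_at (N : nat) (T : finType) gm ep m (f : profile N T) s t :
  capture (play f s t) -> (forall t', t' < t -> ~~ capture (play f s t')) ->
  payoff gm ep m f s = (reward ep m (play f s t) * gm ^ t)%R.
Proof.
move=> Ct Hmin; rewrite /payoff; case: excluded_middle_informative => [H|H];
  last by exfalso; apply H; exists t.
case: ex_minnP => t' Ct' Hm.
have le1 := Hm _ Ct.
suff -> : t' = t by [].
apply/eqP; rewrite eqn_leq le1 /=; rewrite leqNgt; apply/negP => lt.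
by move: (Hmin _ lt); rewrite Ct'.
Qed.

Lemma payoff_late (N : nat) (T : finType) gm ep (m : 'I_N) (f : profile N T) s :
  is_robber m -> (0 < gm < 1)%R ->
  ~~ capture (play f s 0) -> ~~ capture (play f s 1) ->
  (- gm < payoff gm ep m f s)%R.
Proof.
move=> Rm Hg C0 C1; rewrite /payoff; case: excluded_middle_informative => [H|H];
  last by lra.
case: ex_minnP => t Ct _.
rewrite /reward Rm.
case: t Ct => [|[|t]] Ct; first by rewrite Ct in C0.
  by rewrite Ct in C1.
have := pow_lt_1_compat gm t.+1 (conj (Rlt_le _ _ (proj1 Hg)) (proj2 Hg)) (Nat.lt_0_succ _).
move=> [A B]. have E : (gm ^ t.+2 = gm * gm ^ t.+1)%R by []. rewrite E. nra.
Qed.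
Lemma onr (N : nat) (T : finType) (rob : 'I_N) (Hr : is_robber rob) (s : state N T) i :
  on_robber s i = (s.1 i == s.1 rob).
Proof.
apply/existsP/eqP => [[j /andP [Rj /eqP E]]|E]; last by exists rob; rewrite Hr E eqxx.
have jr : j = rob by apply/val_inj; move: Rj Hr; rewrite /is_robber => /eqP -> /eqP ->.
by rewrite -jr.
Qed.

Lemma single_cap (N : nat) (T : finType) (rob : 'I_N) (Hr : is_robber rob)
  (s : state N T) k : is_cop k -> s.1 k = s.1 rob -> capture s.
Proof. by move=> Ck E; apply/existsP; exists k; rewrite Ck (onr Hr) E eqxx. Qed.

Lemma single_ncops (N : nat) (T : finType) (rob : 'I_N) (Hr : is_robber rob)
  (s : state N T) k : is_cop k -> s.1 k = s.1 rob ->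
  (forall i, is_cop i -> i != k -> s.1 i != s.1 rob) -> ncops_on s = 1.
Proof.
move=> Ck E H; rewrite /ncops_on -(card1 k); apply: eq_card => i /=.
rewrite !inE /= (onr Hr); case: (eqVneq i k) => [->|ik]; first by rewrite Ck E eqxx.
case Ci: (is_cop i) => //=; exact: negbTE (H _ Ci ik).
Qed.

Lemma reward_single (N : nat) (T : finType) (rob : 'I_N) (Hr : is_robber rob)
  (s : state N T) k eps m : is_cop k -> s.1 k = s.1 rob ->
  (forall i, is_cop i -> i != k -> s.1 i != s.1 rob) -> is_cop m -> m != k ->
  3 < N -> reward eps m s = (eps / INR (N - 1 - 1))%R.
Proof.
move=> Ck E H Cm mk HN; rewrite /reward.
have -> : is_robber m = false by move: Cm; rewrite /is_cop /is_robber => /negbTE.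
rewrite (single_ncops Hr Ck E H).
have -> : (1 == N.-1) = false by apply/eqP; lia.
by rewrite (onr Hr) (negbTE (H _ Cm mk)).
Qed.

Lemma iter_ordS N (k : 'I_N) n : val (iter n (@ordS N) k) = (k + n) %% N.
Proof.
elim: n => [|n IH] /=; first by rewrite addn0 modn_small.
by rewrite IH addnS -addn1 modnDml addn1.
Qed.

Lemma reach_all (N : nat) (T : finType) (e : rel T) (p : {ffun 'I_N -> T}) k0
  (Hleg : forall x y, legal e x y) (Hs0 : ~~ capture (p, k0)) j :
  reach e (p, k0) (p, j).
Proof.
have St : forall j, step (p, j) (p j) = (p, ordS j).
  move=> j'; congr pair; apply/ffunP => i; rewrite ffunE /=.
  by case: eqP => // ->.
have R : forall n, reach e (p, k0) (p, iter n (@ordS N) k0).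
  elim=> [|n IH] /=; first exact: reach0.
  rewrite -St; apply: reachS => //.
have -> : j = iter ((N - k0) + j) (@ordS N) k0.
  apply/val_inj; rewrite iter_ordS addnA subnKC; last exact: ltnW (ltn_ord k0).
  by rewrite modnDl modn_small.
exact: R.
Qed.
Lemma INR_pos (N : nat) : 3 < N -> (0 < INR (N - 1 - 1))%R.
Proof. move=> HN; apply: lt_0_INR; apply/ltP; lia. Qed.

Unset Implicit Arguments.
Theorem mainTheorem2 (T : finType) (e : rel T)
    (Hsym : symmetric e) (Hirr : irreflexive e)
    (Hconn : forall x y : T, connect e x y) (HV : #|T| = 2)
    (N : nat) (HN : 3 < N)
    (eps : R) (Heps : (0 < eps <= / INR (N - 1))%R)
    (s0 : state N T) (Hs0 : ~~ capture s0)
    (gamma : R) (Hg : (0 < gamma < 1)%R)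
    (phi : 'I_N -> pprofile N T) (Htr : trigger_choice e gamma eps phi) :
  ~ positional_trigger e gamma eps s0 phi.
Proof.
move: Hs0; case: s0 => p k0 Hs0 Hpos.
have Hleg := legal_all Hirr Hconn HV.
have h0 : 0 < N by lia.
have h1 : 1 < N by lia.
have hr : N.-1 < N by lia.
have hm : N - 2 < N by lia.
pose i0 : 'I_N := Ordinal h0.
pose i1 : 'I_N := Ordinal h1.
pose rob : 'I_N := Ordinal hr.
pose m : 'I_N := Ordinal hm.
have Hr : is_robber rob by rewrite /is_robber /= eqxx.
have C0 : is_cop i0 by rewrite /is_cop /=; apply/eqP; lia.
have C1 : is_cop i1 by rewrite /is_cop /=; apply/eqP; lia.
have Cm : is_cop m by rewrite /is_cop /=; apply/eqP; lia.
have n1m : i1 != m by apply/eqP => /(congr1 val) /=; lia.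
have n10 : i1 != i0 by apply/eqP => /(congr1 val) /=; lia.
have nm0 : m != i0 by apply/eqP => /(congr1 val) /=; lia.
have n0r : i0 != rob by apply/eqP => /(congr1 val) /=; lia.
have n1r : i1 != rob by apply/eqP => /(congr1 val) /=; lia.
have Sn0 : ordS i0 = i1 by apply/val_inj; rewrite /= modn_small.
have NC : forall i, is_cop i -> p i != p rob.
  move=> i Ci; apply/negP => E; move/negP: Hs0; apply; apply/existsP; exists i.
  by rewrite Ci (onr Hr).
have NCj : forall j, ~~ capture (p, j).
  move=> j; apply/negP => /existsP [i /andP [Ci]]; rewrite (onr Hr) /=.
  by apply/negP; apply: NC.
pose s : state N T := (p, i0).
have ncs : ~~ capture s by apply: NCj.
have Rs : reach e (p, k0) s by apply: reach_all.
have St : forall j, step (p, j) (p j) = (p, ordS j).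
  move=> j'; congr pair; apply/ffunP => i; rewrite ffunE /=.
  by case: eqP => // ->.
have Sing : forall (j : 'I_N), is_cop j ->
   [/\ capture (step (p, j) (p rob)),
       (step (p, j) (p rob)).1 j = (step (p, j) (p rob)).1 rob &
       forall i, is_cop i -> i != j -> (step (p, j) (p rob)).1 i != (step (p, j) (p rob)).1 rob].
  move=> j Cj.
  have rj : rob != j by apply/negP => /eqP rj; move: Cj; rewrite -rj /is_cop /= eqxx.
  have E1 : (step (p, j) (p rob)).1 j = (step (p, j) (p rob)).1 rob.
    by rewrite /= !ffunE eqxx (negbTE rj).
  split => //; first exact: (single_cap Hr Cj E1).
  move=> i Ci ij; rewrite /= !ffunE (negbTE ij) (negbTE rj); exact: NC.
have [sigma [CRo Hag]] := Hpos i0 m.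
have Hms := Hag s Rs erefl ncs.
case: CRo => _ [rr [phi' [Rrr [Opt Hphi']]]].
have Hps := Hphi' s erefl ncs.
have rrE : rr = rob.
  apply/val_inj; move: Rrr Hr; rewrite /is_robber => /eqP -> /eqP -> //.
have Hp' : phi' i0 s = p rob.
  case: (eqVneq (phi' i0 s) (p rob)) => // ne.
  have Ep : phi' i0 s = p i0 := two_pts HV ne (NC _ C0).
  pose g : profile N T := fun n past cur => cur.1 rob.
  have Hg' : legal_profile e g by move=> ? ? _; apply: Hleg.
  case: Opt => _ Opt; have [_ H2] := Opt s ncs g Hg'.
  have [Cap1 _ _] := Sing i0 C0.
  have P1 : play (mix rr (embed phi') g) s 1 = step s (p rob).
    transitivity (step s (mix rr (embed phi') g i0 [::] s)); first by [].
    by rewrite /mix rrE (negbTE n0r).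
  have Q1 : play (embed phi') s 1 = (p, i1).
    transitivity (step s (phi' i0 s)); first by [].
    by rewrite Ep -Sn0 -St.
  have L := @payoff_late N T gamma eps rr (embed phi') s Rrr Hg ncs
     ltac:(rewrite Q1; apply: NCj).
  have Eq := @payoff_at N T gamma eps rr (mix rr (embed phi') g) s 1.
  rewrite P1 in Eq; have {Eq} Eq := Eq Cap1.
  rewrite Eq in H2; last by case.
  move: H2; rewrite /reward Rrr pow_1; lra.
have Hm0 : phi m i0 s = p rob by rewrite Hms -Hps.
pose g2 : profile N T := fun n past cur => if n == i0 then cur.1 n else cur.1 rob.
have Hg2 : legal_profile e g2 by move=> ? ? _; apply: Hleg.
have [_ Optm] := Htr m; have [_ H2] := Optm s ncs g2 Hg2.
have [Cap1 E1 U1] := Sing i0 C0.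
have [Cap2 E2 U2] := Sing i1 C1.
have P1 : play (embed (phi m)) s 1 = step s (p rob).
  transitivity (step s (phi m i0 s)); first by [].
  by rewrite Hm0.
have Q1 : play (mix m (embed (phi m)) g2) s 1 = (p, i1).
  transitivity (step s (mix m (embed (phi m)) g2 i0 [::] s)); first by [].
  rewrite /mix eq_sym (negbTE nm0) /g2 eqxx.
  by rewrite -Sn0 -St.
have Q2 : play (mix m (embed (phi m)) g2) s 2 = step (p, i1) (p rob).
  transitivity (step (play (mix m (embed (phi m)) g2) s 1)
    (mix m (embed (phi m)) g2 (play (mix m (embed (phi m)) g2) s 1).2 [:: s]
       (play (mix m (embed (phi m)) g2) s 1))); first by [].
  by rewrite Q1 /mix /= (negbTE n1m) /g2 (negbTE n10).
have EqL := @payoff_at N T gamma eps m (embed (phi m)) s 1.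
rewrite P1 in EqL; have {}EqL := EqL Cap1.
rewrite EqL in H2; last by case.
have EqR := @payoff_at N T gamma eps m (mix m (embed (phi m)) g2) s 2.
rewrite Q2 in EqR; have {}EqR := EqR Cap2.
rewrite EqR in H2; last first.
  case=> [|[|t]] // _; rewrite ?Q1; apply: NCj.
rewrite (@reward_single N T rob Hr _ i0 eps m C0 E1 U1 Cm nm0 HN) in H2.
have nm1 : m != i1 by rewrite eq_sym.
rewrite (@reward_single N T rob Hr _ i1 eps m C1 E2 U2 Cm nm1 HN) in H2.
exact: (final_contra (pos_div (proj1 Heps) (INR_pos HN)) Hg H2).
Qed.
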